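(* For every $m\geq 1$ and every $\alpha=(\alpha_0,\dots,\alpha_{m-1})\in\mathbb{N}^m$, the function $n\mapsto u_\alpha(n)$ has a rational generating function; that is, there exist polynomials $P(x),Q(x)\in\mathbb{C}[x]$ with $Q(0)\neq 0$ such that $\sum_{n\geq 0}u_\alpha(n)x^n=P(x)/Q(x)$ as formal power series (equivalently, $u_\alpha(n)$ satisfies a linear recurrence with constant coefficients for all sufficiently large $n$).
   Context: $\mathbb{N}=\{0,1,2,\dots\}$. Stern's triangle is the array of integers $a(n,k)$, $n\geq 0$, $k\in\mathbb{Z}$, defined as follows. Row $n$ consists of $a(n,0),\dots,a(n,N_n)$ with $N_n=2^{n+1}-2$, and $a(n,k)=0$ if $k<0$ or $k>N_n$. Row $0$ is $a(0,0)=1$. Given row $n$ with $N=N_n$: $a(n+1,0)=1$, $a(n+1,2j+1)=a(n,j)$ for $0\leq j\leq N$, $a(n+1,2j+2)=a(n,j)+a(n,j+1)$ for $0\leq j\leq N-1$, and $a(n+1,2N+2)=1$. (Equivalently, $\sum_k a(n,k)x^k=\prod_{i=0}^{n-1}(1+x^{2^i}+x^{2\cdot 2^i})$.) For $\alpha=(\alpha_0,\dots,\alpha_{m-1})\in\mathbb{N}^m$ define $$u_\alpha(n)=\sum_{k\geq 0} a(n,k)^{\alpha_0}a(n,k+1)^{\alpha_1}\cdots a(n,k+m-1)^{\alpha_{m-1}}.$$ *)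

(* Defs.v *)
From mathcomp Require Import all_boot all_algebra.
From mathcomp Require Import reals complex.
Set Implicit Arguments. Unset Strict Implicit. Unset Printing Implicit Defensive.
Import GRing.Theory.

(* N_n = 2^(n+1) - 2 : index of the last entry of row n *)
Definition Nrow (n : nat) : nat := 2 ^ n.+1 - 2.

(* Stern's triangle a(n,k) for k >= 0 (a(n,k) = 0 for k > N_n; negative k
   never occur in u_alpha since the sum is over k >= 0). *)
Fixpoint stern (n k : nat) {struct n} : nat :=
  match n with
  | 0 => if k == 0 then 1 else 0
  | n'.+1 =>
      if k == 0 then 1
      else if k == (Nrow n').*2.+2 then 1
      else if (Nrow n').*2.+2 < k then 0
      else if odd k then stern n' k./2           (* k = 2j+1, j = k/2 *)
      else stern n' k./2.-1 + stern n' k./2      (* k = 2j+2, j = k/2 - 1 *)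
  end.

(* u_alpha(n) = sum_{k>=0} prod_i a(n,k+i)^alpha_i.  For alpha <> 0 every
   term with k > N_n vanishes, so the sum over 0 <= k <= N_n is the full sum. *)
Definition u_alpha (m : nat) (alpha : m.-tuple nat) (n : nat) : nat :=
  \sum_(k < (Nrow n).+1) \prod_(i < m) stern n (k + i) ^ tnth alpha i.

(* Main.v *)
Require Import Defs.
From mathcomp Require Import all_boot all_algebra.
From mathcomp Require Import reals complex.
From mathcomp Require Import zify.
Import GRing.Theory.
Set Implicit Arguments. Unset Strict Implicit. Unset Printing Implicit Defensive.
Fixpoint cc (n k : nat) {struct n} : nat :=
  match n with
  | 0 => (k == 1)
  | n'.+1 => if odd k then cc n' k./2 + cc n' k./2.+1 else cc n' k./2
  end.

Lemma NrowS n : Nrow n.+1 = (Nrow n).*2.+2.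
Proof.
rewrite /Nrow !expnS -!muln2.
have : 0 < 2 ^ n by rewrite expn_gt0.
lia.
Qed.

Lemma stern_gt n k : Nrow n < k -> stern n k = 0.
Proof.
case: n => [|n] /=; first by case: k.
rewrite NrowS => h.
have -> : (k == 0) = false by lia.
have -> : (k == (Nrow n).*2.+2) = false by lia.
by rewrite h.
Qed.

Lemma stern_N n : stern n (Nrow n) = 1.
Proof.
case: n => [|n] //=.
rewrite NrowS eqxx.
by case: ((Nrow n).*2.+2 == 0).
Qed.

Lemma cc0 n : cc n 0 = 0.
Proof. by elim: n => //= n ->. Qed.

Lemma nat_parity k : exists j, k = j.*2 \/ k = j.*2.+1.
Proof.
exists k./2; have := odd_double_half k; case: (odd k) => /= h; [right|left]; lia.
Qed.

Lemma cc_even n j : cc n.+1 j.*2 = cc n j.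
Proof. by rewrite /= odd_double doubleK. Qed.

Lemma cc_odd n j : cc n.+1 j.*2.+1 = cc n j + cc n j.+1.
Proof. by rewrite /= odd_double /= uphalf_double. Qed.

Lemma cc_stern n k : cc n k.+1 = stern n k.
Proof.
elim: n k => [|n IH] k; first by case: k.
have [j [->|->]] := nat_parity k.
  rewrite cc_odd /=.
  case: j => [|j]; first by rewrite /= cc0 add0n IH; case: (n).
  rewrite !IH -doubleS.
  have -> : (j.+1.*2 == 0) = false by lia.
  case: eqP => [h|h].
    have -> : j = Nrow n by lia.
    by rewrite stern_N stern_gt.
  case: ifP => [h2|h2].
    by rewrite !stern_gt //; lia.
  by rewrite odd_double doubleK.
rewrite -doubleS cc_even /=.
have -> : (j.*2.+1 == (Nrow n).*2.+2) = false by lia.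
case: ifP => [h2|h2].
  by rewrite IH stern_gt //; lia.
by rewrite odd_double /= uphalf_double IH.
Qed.
Local Open Scope ring_scope.

Section Span.
Variables (F : comNzRingType) (L' D : nat).
Local Notation L := L'.+1.
Local Notation I := {ffun 'I_L -> 'I_D.+1}.

Definition deg (g : I) : nat := (\sum_(i < L) (g i : nat))%N.
Definition mon (g : I) (w : 'I_L -> nat) : F := \prod_(i < L) (w i)%:R ^+ g i.
Definition spanned (e : nat) (f : ('I_L -> nat) -> F) :=
  exists c : I -> F, (forall g, (e < deg g)%N -> c g = 0) /\
    forall w, f w = \sum_g c g * mon g w.

Lemma mon_ext g w w' : (forall i, w i = w' i) -> mon g w = mon g w'.
Proof. by move=> h; apply: eq_bigr => i _; rewrite h. Qed.

Lemma deg_ge (g : I) (i : 'I_L) : (g i <= deg g)%N.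
Proof. by rewrite /deg (bigD1 i) //=; apply: leq_addr. Qed.

Lemma spanned_mon g : spanned (deg g) (mon g).
Proof.
exists (fun h => (h == g)%:R); split.
  by move=> h; case: eqP => [->|]; rewrite ?ltnn.
move=> w; rewrite (bigD1 g) //= eqxx mul1r big1 ?addr0 //.
by move=> h /negbTE ->; rewrite mul0r.
Qed.

Lemma spanned_add e f f' : spanned e f -> spanned e f' ->
  spanned e (fun w => f w + f' w).
Proof.
move=> [c [hc ec]] [c' [hc' ec']]; exists (fun g => c g + c' g); split.
  by move=> g h; rewrite hc // hc' // addr0.
by move=> w; rewrite ec ec' -big_split /=; apply: eq_bigr => g _; rewrite mulrDl.
Qed.

Lemma spanned_mono e e' f : (e <= e')%N -> spanned e f -> spanned e' f.
Proof.
move=> le [c [hc ec]]; exists c; split => // g h; apply: hc.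
exact: leq_ltn_trans h.
Qed.

Definition addI (g h : I) : I := [ffun i => inord (g i + h i)].

Lemma addI_val g h i : (deg g + deg h <= D)%N -> (addI g h i : nat) = (g i + h i)%N.
Proof.
move=> hd; rewrite ffunE inordK //.
have := deg_ge g i; have := deg_ge h i; lia.
Qed.

Lemma deg_addI g h : (deg g + deg h <= D)%N -> deg (addI g h) = (deg g + deg h)%N.
Proof.
move=> hd; rewrite /deg -big_split /=; apply: eq_bigr => i _; exact: addI_val.
Qed.

Lemma mon_addI g h w : (deg g + deg h <= D)%N -> mon (addI g h) w = mon g w * mon h w.
Proof.
move=> hd; rewrite /mon -big_split /=; apply: eq_bigr => i _.
by rewrite addI_val // exprD.
Qed.

Lemma spanned_mul a b f f' : (a + b <= D)%N -> spanned a f -> spanned b f' ->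
  spanned (a + b) (fun w => f w * f' w).
Proof.
move=> hab [c [hc ec]] [c' [hc' ec']].
exists (fun k => \sum_(p : I * I | addI p.1 p.2 == k) c p.1 * c' p.2); split.
  move=> k hk; apply: big1 => [[g h]] /= /eqP hgh.
  case: (leqP (deg g) a) => ha; last by rewrite hc // mul0r.
  case: (leqP (deg h) b) => hb; last by rewrite hc' // mulr0.
  move: hk; rewrite -hgh deg_addI; lia.
move=> w; rewrite ec ec' big_distrlr /= pair_big /=.
rewrite (partition_big (fun p : I * I => addI p.1 p.2) predT) //=.
apply: eq_bigr => k _; rewrite mulr_suml; apply: eq_bigr => [[g h]] /= /eqP <-.
case: (leqP (deg g) a) => ha; last by rewrite hc // !mul0r.
case: (leqP (deg h) b) => hb; last by rewrite hc' // !(mulr0, mul0r).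
rewrite mon_addI; last lia.
by rewrite mulrACA.
Qed.


Lemma spanned_ext e f f' : (forall w, f w = f' w) -> spanned e f -> spanned e f'.
Proof. by move=> h [c [hc ec]]; exists c; split => // w; rewrite -h. Qed.

Lemma spanned_one : spanned 0 (fun _ => 1).
Proof.
pose g0 : I := [ffun _ => ord0].
have dg : deg g0 = 0%N by rewrite /deg big1 // => i _; rewrite ffunE.
have := spanned_mon g0; rewrite dg => H; apply: spanned_ext H => w.
by rewrite /mon big1 // => i _; rewrite ffunE expr0.
Qed.

Lemma spanned_coord (p : 'I_L) : (0 < D)%N -> spanned 1 (fun w => (w p)%:R).
Proof.
move=> D0; pose g : I := [ffun i => inord (i == p)].
have gv i : (g i : nat) = (i == p) by rewrite ffunE inordK //; case: (i == p).
have dg : deg g = 1%N.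
  rewrite /deg (bigD1 p) //= big1 ?gv ?eqxx // => i /negbTE h; by rewrite gv h.
have := spanned_mon g; rewrite dg => H; apply: spanned_ext H => w.
rewrite /mon (bigD1 p) //= big1 ?gv ?eqxx ?mulr1 ?expr1 //.
by move=> i /negbTE h; rewrite gv h expr0.
Qed.

Lemma spanned_exp f k : spanned 1 f -> (k <= D)%N -> spanned k (fun w => f w ^+ k).
Proof.
move=> hf; elim: k => [|k IH] hk.
  by apply: spanned_ext spanned_one => w; rewrite expr0.
rewrite -addn1; apply: spanned_ext (spanned_mul _ (IH (ltnW hk)) hf).
  by move=> w; rewrite addn1 exprSr.
by rewrite addn1.
Qed.

Lemma spanned_prod (s : seq 'I_L) (e : 'I_L -> nat) (h : 'I_L -> ('I_L -> nat) -> F) :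
  (forall i, spanned (e i) (h i)) -> (\sum_(i <- s) e i <= D)%N ->
  spanned (\sum_(i <- s) e i) (fun w => \prod_(i <- s) h i w).
Proof.
move=> hh; elim: s => [|i s IH] hs.
  by rewrite big_nil; apply: spanned_ext spanned_one => w; rewrite big_nil.
rewrite big_cons in hs *.
apply: spanned_ext (spanned_mul hs (hh i) (IH _)) => [w|]; first by rewrite big_cons.
exact: leq_trans (leq_addl _ _) hs.
Qed.

End Span.

Section Step.
Variables (F : comNzRingType) (L' D : nat).
Hypothesis hL : (3 <= L')%N.
Hypothesis hD : (0 < D)%N.
Local Notation L := L'.+1.
Local Notation I := {ffun 'I_L -> 'I_D.+1}.
Local Notation deg := (@deg L' D).
Local Notation mon := (@mon F L' D).
Local Notation spanned := (@spanned F L' D).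

Definition win n k : 'I_L -> nat := fun i => cc n (k + i).
Definition T (g : I) n : F := \sum_(k < 2 ^ n.+2) mon g (win n k).
Definition Es (s : nat) (w : 'I_L -> nat) : 'I_L -> nat := fun i =>
  if odd (s + i) then (w (inord (s + i)./2) + w (inord (s + i)./2.+1))%N
  else w (inord (s + i)./2).

Lemma win_step n j s i : (s <= 1)%N -> win n.+1 (j.*2 + s) i = Es s (win n j) i.
Proof.
move=> hs; rewrite /win /Es -addnA.
have hi := ltn_ord i.
have [u [hu|hu]] := nat_parity (s + i); rewrite hu.
  rewrite -doubleD cc_even odd_double doubleK inordK //; lia.
rewrite addnS -doubleD cc_odd /= odd_double /= uphalf_double.
rewrite !inordK; [ by rewrite addnS | lia | lia].
Qed.

Lemma sum_double (f : nat -> F) B :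
  \sum_(k < B.*2) f k = \sum_(j < B) (f j.*2 + f j.*2.+1).
Proof.
elim: B => [|B IH]; first by rewrite !big_ord0.
by rewrite doubleS !big_ord_recr /= IH addrA.
Qed.

Lemma spanned_Es s (g : I) : (deg g <= D)%N -> spanned (deg g) (fun w => mon g (Es s w)).
Proof.
move=> hg; have h1 i : spanned 1 (fun w => (Es s w i)%:R).
  rewrite /Es; case: (odd _).
    by apply: spanned_ext (spanned_add (spanned_coord _ _ hD) (spanned_coord _ _ hD)) => w; rewrite natrD.
  exact: spanned_coord.
exact: (@spanned_prod F L' D (index_enum _) (fun i => g i) (fun i w => (Es s w i)%:R ^+ g i)
   (fun i => spanned_exp (h1 i) (ltn_ord (g i))) hg).
Qed.


Lemma T_step (g : I) : (deg g <= D)%N -> exists c : I -> F,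
  (forall h, (deg g < deg h)%N -> c h = 0) /\ forall n, T g n.+1 = \sum_h c h * T h n.
Proof.
move=> hg; have [c [hc ec]] := spanned_add (spanned_Es 0 hg) (spanned_Es 1 hg).
exists c; split => // n.
rewrite /T expnS mul2n (sum_double (fun k => mon g (win n.+1 k))).
transitivity (\sum_(j < 2^n.+2) \sum_h c h * mon h (win n j)).
  apply: eq_bigr => j _; rewrite -ec; congr (_ + _); apply: mon_ext => i.
    by rewrite -win_step // addn0.
  by rewrite -win_step // addn1.
by rewrite exchange_big; apply: eq_bigr => h _; rewrite mulr_sumr.
Qed.

End Step.

Lemma linrec (F : comNzRingType) (I : finType) (V : I -> nat -> F) (coef : I -> I -> F) (g0 : I) :
  (forall g n, V g n.+1 = \sum_h coef g h * V h n) ->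
  exists p : {poly F}, p \is monic /\ forall n, \sum_(i < size p) p`_i * V g0 (n + i)%N = 0.
Proof.
move=> hV.
pose K := #|I|.-1.
have hK : size (enum I) = K.+1.
  rewrite -cardE /K prednK //; apply/card_gt0P; by exists g0.
pose idx (a : 'I_K.+1) := nth g0 (enum I) a.
have sum_I (G : I -> F) : \sum_g G g = \sum_(a < K.+1) G (idx a).
  by rewrite -big_enum (big_nth g0) hK big_mkord.
pose M : 'M[F]_K.+1 := \matrix_(a, b) coef (idx a) (idx b).
pose S n : 'cV[F]_K.+1 := \col_a V (idx a) n.
have hS n : S n.+1 = M *m S n.
  apply/matrixP => a z; rewrite !mxE hV sum_I; apply: eq_bigr => b _; by rewrite !mxE.
have hSn n k : S (n + k)%N = M ^+ n *m S k.
  elim: n => [|n IH]; first by rewrite expr0 mul1mx.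
  by rewrite addSn hS IH exprS mulmxA mulmxE.
exists (char_poly M); split; first exact: char_poly_monic.
move=> n.
set p := char_poly M.
have hh : horner_mx M p = \sum_(i < size p) p`_i *: M ^+ i.
  rewrite -{1}(coefK p) poly_def linear_sum; apply: eq_bigr => i _.
  by rewrite linearZ /= rmorphXn /= horner_mx_X.
have h0 : M ^+ n *m horner_mx M p *m S 0 = 0 by rewrite Cayley_Hamilton mulmx0 mul0mx.
rewrite hh mulmx_sumr mulmx_suml in h0.
have a0P : (index g0 (enum I) < K.+1)%N by rewrite -hK index_mem mem_enum.
pose a0 : 'I_K.+1 := Ordinal a0P.
have ia0 : idx a0 = g0 by rewrite /idx nth_index // mem_enum.
move/matrixP: h0 => /(_ a0 ord0); rewrite summxE mxE => h; apply: (etrans _ h).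
apply: eq_bigr => i _.
rewrite -scalemxAr -scalemxAl -mulmxA.
have := hSn i 0%N; rewrite addn0 => <-.
by rewrite -hSn !mxE ia0.
Qed.

Lemma rec_to_rat (F : comNzRingType) (v : nat -> F) (p : {poly F}) : p \is monic ->
  (forall n, \sum_(i < size p) p`_i * v (n + i)%N = 0) ->
  exists P Q : {poly F}, Q.[0] != 0 /\
    forall n, \sum_(j < n.+1) Q`_j * v (n - j)%N = P`_n.
Proof.
move=> mp hp.
pose d := (size p).-1.
have sp : size p = d.+1 by rewrite /d prednK // size_poly_gt0 monic_neq0.
pose Q := \poly_(j < d.+1) p`_(d - j).
exists (\poly_(n < d) \sum_(j < n.+1) Q`_j * v (n - j)%N), Q; split.
  rewrite horner_coef0 coef_poly /= subn0.
  have := monicP mp; rewrite /lead_coef -/d => ->; exact: oner_neq0.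
move=> n; rewrite coef_poly; case: ltnP => // hn.
transitivity (\sum_(j < d.+1) Q`_j * v (n - j)%N).
  rewrite [RHS](big_ord_widen _ (fun j => Q`_j * v (n - j)%N) (_ : d.+1 <= n.+1)%N) //.
  rewrite [RHS]big_mkcond; apply: eq_bigr => j _; rewrite !coef_poly.
  by case: ifP => _; rewrite ?mul0r.
apply: etrans (hp (n - d)%N); rewrite (reindex_inj rev_ord_inj) /=; move: (hp 0%N) => _.
rewrite [in RHS]sp; apply: eq_bigr => i _.
have hi := ltn_ord i.
rewrite coef_poly subSS (_ : (d - i < d.+1)%N); last lia.
rewrite (_ : (d - (d - i))%N = i); last lia.
by rewrite (_ : (n - (d - i))%N = (n - d + i)%N); last lia.
Qed.
Unset Implicit Arguments.

Lemma sumn_pos (s : seq nat) : has (fun e => 0 < e)%N s -> (0 < sumn s)%N.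
Proof. elim: s => //= x s IH /orP [h|/IH h]; lia. Qed.

Lemma nth_le_sumn (s : seq nat) k : (nth 0 s k <= sumn s)%N.
Proof. elim: s k => [|x s IH] [|k] //=; [lia| have := IH k; lia]. Qed.

Lemma u_widen m (alpha : m.-tuple nat) n : has (fun e => 0 < e)%N alpha ->
  u_alpha alpha n = (\sum_(k < 2 ^ n.+2) \prod_(i < m) stern n (k + i) ^ tnth alpha i)%N.
Proof.
move=> /(has_nthP 0) [i0 hi0 pos].
rewrite size_tuple in hi0.
rewrite /u_alpha (big_ord_widen _ (fun k => \prod_(i < m) stern n (k + i) ^ tnth alpha i)%N
  (_ : (Nrow n).+1 <= 2 ^ n.+2)%N); last first.
  rewrite /Nrow !expnS; have := expn_gt0 2 n; lia.
rewrite big_mkcond /=; apply: eq_bigr => k _; case: ifP => // hk.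
rewrite (bigD1 (Ordinal hi0)) //= stern_gt; last lia.
by rewrite (tnth_nth 0) /= exp0n.
Qed.

Lemma prod_conv m (alpha : m.-tuple nat) n k :
  (\prod_(i < m) stern n (k + i) ^ tnth alpha i)%N =
  (\prod_(i < m.+4) cc n (k + i) ^ (if (i : nat) == 0%N then 0%N else nth 0%N alpha i.-1))%N.
Proof.
rewrite big_ord_recl /= expn0 mul1n.
rewrite [in LHS](eq_bigr (fun i : 'I_m => stern n (k + i) ^ nth 0 alpha i)%N); last first.
  by move=> i _; rewrite (tnth_nth 0).
rewrite (big_ord_widen _ (fun i => stern n (k + i) ^ nth 0 alpha i)%N (_ : m <= m.+3)%N) //.
rewrite big_mkcond /=; apply: eq_bigr => i _.
rewrite /bump /= add1n addnS cc_stern; case: ifP => // hi.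
  by rewrite add0n nth_default ?size_tuple ?expn0 //; lia.
lia.
Qed.

Theorem theorem2p1 (R : realType) (m : nat) (alpha : m.-tuple nat) :
  (0 < m)%N -> has (fun e => 0 < e)%N alpha ->
  exists P Q : {poly R[i]},
    Q.[0] != 0 /\
    forall n : nat,
      \sum_(j < n.+1) Q`_j * ((u_alpha alpha (n - j)%N)%:R : R[i]) = P`_n.
Proof.
move=> m0 hpos.
pose D := sumn alpha.
have hD : (0 < D)%N := @sumn_pos _ hpos.
have hL : (2 < m.+3)%N by lia.
pose ex (i : nat) := if i == 0%N then 0%N else nth 0%N alpha i.-1.
have exD i : (ex i <= D)%N.
  by rewrite /ex; case: ifP => _ //; exact: nth_le_sumn.
pose b0 : {ffun 'I_m.+4 -> 'I_D.+1} := [ffun i : 'I_m.+4 => inord (ex i)].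
have b0v (i : 'I_m.+4) : (b0 i : nat) = ex i by rewrite ffunE inordK // ltnS exD.
have db0 : (deg b0 <= D)%N.
  rewrite /deg (eq_bigr (fun i : 'I_m.+4 => ex i)) => [|i _]; last exact: b0v.
  rewrite big_ord_recl /= add0n /D sumnE (big_nth 0%N) size_tuple big_mkord.
  rewrite (big_ord_widen _ (fun i => nth 0%N alpha i) (_ : m <= m.+3)%N); last lia.
  rewrite [X in (_ <= X)%N]big_mkcond /=; apply: eq_leq; apply: eq_bigr => i _.
  rewrite /bump /= add1n /=; case: ifP => // hi.
  by rewrite /ex /= nth_default ?size_tuple //; lia.
pose V (g : {ffun 'I_m.+4 -> 'I_D.+1}) n : R[i] :=
  if (deg g <= D)%N then T R[i] g n else 0.
have step : forall g, exists c : {ffun 'I_m.+4 -> 'I_D.+1} -> R[i],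
    forall n, V g n.+1 = \sum_h c h * V h n.
  move=> g; case hg: (deg g <= D)%N.
    have [c [hc ec]] := T_step R[i] hL hD hg.
    exists c => n; rewrite {1}/V hg ec; apply: eq_bigr => h _; rewrite /V; case: ifP => // hh.
    by rewrite hc ?mul0r //; lia.
  by exists (fun _ => 0) => n; rewrite {1}/V hg big1 // => h _; rewrite mul0r.
have [coef hcoef] := fin_all_exists step.
have [p [mp hp]] := linrec b0 hcoef.
have hv n : V b0 n = (u_alpha alpha n)%:R.
  rewrite /V db0 /T u_widen // natr_sum; apply: eq_bigr => k _.
  rewrite prod_conv natr_prod /mon; apply: eq_bigr => i _.
  by rewrite natrX b0v /win.
have [P [Q [hQ hPQ]]] := rec_to_rat mp hp.
exists P, Q; split => // n; rewrite -hPQ; apply: eq_bigr => j _.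
by rewrite hv.
Qed.
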